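(* Let $p(L,M,D;\mu=1)$ be a generative reasoning model, let $\alpha\in L$, and let $\Delta\subseteq L$ be finite with $[\![\Delta]\!]_p\neq\emptyset$. Then $p(\alpha\mid\Delta)=1$ if and only if $\Delta\mathrel{|\!\!\equiv}\alpha$.
   Context: Fix a multiset of data $\{d_1,\dots,d_K\}$ with $K\ge1$, and a propositional language $L$ over finitely many atoms, with set of models (truth assignments) $\mathcal M$. A function $m:\{d_1,\dots,d_K\}\to\mathcal M$ assigns to each datum the model it supports. The probability of a model $n$ is $p(n)=|\{k:m(d_k)=n\}|/K$. For a parameter $\mu\in[0,1]$ and $\alpha\in L$, set $p(\alpha\mid m)=\mu$ if $m$ satisfies $\alpha$ and $1-\mu$ otherwise. For finite $\Delta\subseteq L$, set $p(\Delta\mid m)=\prod_{\beta\in\Delta}p(\beta\mid m)$, which is $1$ for empty $\Delta$. Define $$p(\alpha\mid\Delta)=\frac{\sum_{m}p(\alpha\mid m)p(\Delta\mid m)p(m)}{\sum_m p(\Delta\mid m)p(m)}.$$ This is the generative reasoning model $p(L,M,D;\mu)$. For $\mu=1$ the expression is evaluated at $\mu=1$, and it is undefined when the denominator is $0$. Notation: - $[\![\Delta]\!]$ is the set of models satisfying all formulas in $\Delta$, and $[\![\alpha]\!]=[\![\{\alpha\}]\!]$. - $[\![\Delta]\!]_p=\{m\in[\![\Delta]\!]:p(m)\neq0\}$. - $\Delta\mathrel{|\!\!\equiv}\alpha$ (empirical consequence) means $[\![\Delta]\!]_p\subseteq[\![\alpha]\!]_p$. *)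

(* Defs.v *)
From mathcomp Require Import all_boot all_order all_algebra.
Set Implicit Arguments. Unset Strict Implicit. Unset Printing Implicit Defensive.
Import Order.TTheory GRing.Theory Num.Theory.
Local Open Scope ring_scope.

Inductive pform (A : Type) : Type :=
  | fAtom of A
  | fTrue
  | fFalse
  | fNot of pform A
  | fAnd of pform A & pform A
  | fOr of pform A & pform A
  | fImp of pform A & pform A.
Arguments fTrue {A}. Arguments fFalse {A}.

Definition model (A : finType) := {ffun A -> bool}.

Fixpoint sat (A : finType) (n : model A) (f : pform A) : bool :=
  match f with
  | fAtom x => n x
  | fTrue => true
  | fFalse => false
  | fNot g => ~~ sat n g
  | fAnd g h => sat n g && sat n h
  | fOr g h => sat n g || sat n h
  | fImp g h => sat n g ==> sat n h
  end.

(* Data d_1..d_K are indexed by 'I_K; m : 'I_K -> model A assigns to each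
   datum the model it supports.  p(n) = |{k : m(d_k) = n}| / K. *)
Definition prob (R : numFieldType) (A : finType) (K : nat)
  (m : 'I_K -> model A) (n : model A) : R :=
  #|[set k | m k == n]|%:R / K%:R.

Definition p_form (R : numFieldType) (A : finType) (mu : R) (a : pform A)
  (n : model A) : R := if sat n a then mu else 1 - mu.

Definition p_set (R : numFieldType) (A : finType) (mu : R) (D : seq (pform A))
  (n : model A) : R := \prod_(b <- D) p_form mu b n.

Definition gen_prob (R : numFieldType) (A : finType) (K : nat) (mu : R)
  (m : 'I_K -> model A) (a : pform A) (D : seq (pform A)) : R :=
  (\sum_(n : model A) p_form mu a n * p_set mu D n * prob R m n) /
  (\sum_(n : model A) p_set mu D n * prob R m n).

Definition models_p (R : numFieldType) (A : finType) (K : nat)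
  (m : 'I_K -> model A) (D : seq (pform A)) : {set model A} :=
  [set n | all (sat n) D & prob R m n != 0].

Definition emp_cons (R : numFieldType) (A : finType) (K : nat)
  (m : 'I_K -> model A) (D : seq (pform A)) (a : pform A) : bool :=
  models_p R m D \subset models_p R m [:: a].

(* Main.v *)
From mathcomp Require Import all_boot all_order all_algebra.
Require Import Defs.
Import Order.TTheory GRing.Theory Num.Theory.
Local Open Scope ring_scope.

Lemma pf1 (R : realFieldType) (A : finType) (b : pform A) n :
  p_form (1 : R) b n = (sat n b)%:R.
Proof. by rewrite /p_form; case: (sat n b); rewrite ?subrr. Qed.

Lemma ps1 (R : realFieldType) (A : finType) (D : seq (pform A)) n :
  p_set (1 : R) D n = (all (sat n) D)%:R.
Proof.
rewrite /p_set; elim: D => [|b D IH]; first by rewrite big_nil.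
by rewrite big_cons IH pf1 /=; case: (sat n b); rewrite ?mul1r ?mul0r.
Qed.

Lemma prob_ge0 (R : realFieldType) (A : finType) K (m : 'I_K -> model A) n :
  0 <= prob R m n.
Proof. by rewrite /prob divr_ge0 ?ler0n. Qed.

Theorem corollary2 (R : realFieldType) (A : finType) (K : nat)
  (hK : (0 < K)%N) (m : 'I_K -> model A) (a : pform A) (D : seq (pform A)) :
  models_p R m D != set0 ->
  (gen_prob 1 m a D = 1 :> R <-> emp_cons R m D a).
Proof.
case/set0Pn => n0; rewrite inE => /andP [Dn0 pn0].
set w := fun n => p_set (1:R) D n * prob R m n.
have w0 : forall n, 0 <= w n by move=> n; rewrite /w ps1 mulr_ge0 ?ler0n ?prob_ge0.
have S0 : \sum_n w n != 0.
  rewrite (bigD1 n0) //= paddr_eq0 ?sumr_ge0 // negb_and; apply/orP; left.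
  by rewrite /w ps1 Dn0 mul1r.
have E : gen_prob 1 m a D = 1 :> R <-> \sum_n (1 - p_form 1 a n) * w n = 0.
  rewrite /gen_prob -/w.
  rewrite (eq_bigr (fun n => p_form (1:R) a n * w n)); last first.
    by move=> n _; rewrite /w mulrA.
  have -> : \sum_n (1 - p_form (1:R) a n) * w n = \sum_n w n - \sum_n p_form 1 a n * w n.
    by rewrite -sumrB; apply: eq_bigr => n _; rewrite mulrBl mul1r.
  split.
    by move/(divr1_eq) => ->; rewrite subrr.
  by move/eqP; rewrite subr_eq0 => /eqP <-; rewrite divff.
split.
- move/E/eqP; rewrite psumr_eq0; last first.
    by move=> n _; rewrite mulr_ge0 // pf1; case: (sat n a); rewrite ?subrr ?subr0.
  move/allP => H; apply/subsetP => n; rewrite !inE => /andP [Dn pn].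
  have := H n (mem_index_enum _); rewrite /w ps1 Dn pf1 mul1r mulf_eq0 (negPf pn) orbF.
  by rewrite /= andbT; case: (sat n a) => //=; rewrite subr0 oner_eq0.
- move/subsetP => H; apply/E; rewrite big1 // => n _.
  rewrite /w ps1 pf1.
  case Dn: (all (sat n) D); last by rewrite mul0r mulr0.
  have [pn|pn] := eqVneq (prob R m n) 0; first by rewrite pn !mulr0.
  have := H n; rewrite !inE Dn pn /= andbT => /(_ isT); rewrite andbT => ->.
  by rewrite subrr mul0r.
Qed.
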